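(* Let the alphabet be countable, $\mu$ a probability on sentences, and $\varphi$ a formula having a single free variable $x$ of type $\alpha$. Let $t_1,t_2,\dots$ be an enumeration of all closed terms of type $\alpha$. Then (1) $\sup_{\{s_1,\dots,s_n\}}\mu(\bigvee_{i=1}^n\varphi\{x/s_i\})=\lim_{n\to\infty}\mu(\bigvee_{i=1}^n\varphi\{x/t_i\})$, and (2) $\inf_{\{s_1,\dots,s_n\}}\mu(\bigwedge_{i=1}^n\varphi\{x/s_i\})=\lim_{n\to\infty}\mu(\bigwedge_{i=1}^n\varphi\{x/t_i\})$, where on the left-hand sides $\{s_1,\dots,s_n\}$ ranges over all finite sets of closed terms of type $\alpha$.
   Context: Setting: higher-order logic (Church's simple theory of types), with Henkin semantics; an alphabet is countable if its set of constants is countable. Formulas are terms of type $o$, sentences closed formulas; $\mathcal S$ is the set of sentences; $\varphi\{x/t\}$ denotes substitution of $t$ for the free occurrences of $x$. A sentence is valid if true in every interpretation. A probability on sentences is a non-negative $\mu:\mathcal S\to\mathbb R$ with $\mu(\varphi)=1$ for valid $\varphi$ and $\mu(\varphi\vee\psi)=\mu(\varphi)+\mu(\psi)$ whenever $\neg(\varphi\wedge\psi)$ is valid. *)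

(* Defs.v *)
From Stdlib Require Import Reals List ClassicalEpsilon.
Import ListNotations.
Open Scope R_scope.

Set Implicit Arguments.

(** Simple types over a set [B] of base types; [TyO] is the type o of truth values. *)
Inductive ty (B : Type) : Type :=
| TyBase : B -> ty B
| TyO : ty B
| TyArr : ty B -> ty B -> ty B.
Arguments TyO {B}.

(** Raw terms (Church style: variables are pairs (name, type)).
    [C] is the set of (non-logical) constants of the alphabet. *)
Inductive term (B C : Type) : Type :=
| TmVar : nat -> ty B -> term B C
| TmCon : C -> term B C
| TmApp : term B C -> term B C -> term B C
| TmAbs : nat -> ty B -> term B C -> term B C
| TmNot : term B C -> term B C
| TmAnd : term B C -> term B C -> term B C
| TmOr  : term B C -> term B C -> term B C
| TmAll : nat -> ty B -> term B C -> term B C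
| TmEx  : nat -> ty B -> term B C -> term B C
| TmEq  : term B C -> term B C -> term B C.
Arguments TmCon {B C}.

Section Syntax.
Variables (B C : Type) (ctype : C -> ty B).

Inductive has_type : term B C -> ty B -> Prop :=
| HT_Var : forall y b, has_type (TmVar C y b) b
| HT_Con : forall c, has_type (TmCon c) (ctype c)
| HT_App : forall t u a b, has_type t (TyArr a b) -> has_type u a ->
    has_type (TmApp t u) b
| HT_Abs : forall y a t b, has_type t b -> has_type (TmAbs y a t) (TyArr a b)
| HT_Not : forall t, has_type t TyO -> has_type (TmNot t) TyO
| HT_And : forall t u, has_type t TyO -> has_type u TyO -> has_type (TmAnd t u) TyO
| HT_Or  : forall t u, has_type t TyO -> has_type u TyO -> has_type (TmOr t u) TyO
| HT_All : forall y a t, has_type t TyO -> has_type (TmAll y a t) TyO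
| HT_Ex  : forall y a t, has_type t TyO -> has_type (TmEx y a t) TyO
| HT_Eq  : forall t u a, has_type t a -> has_type u a -> has_type (TmEq t u) TyO.

Fixpoint free_in (x : nat) (a : ty B) (t : term B C) : Prop :=
  match t with
  | TmVar _ y b => x = y /\ a = b
  | TmCon _ => False
  | TmApp t u => free_in x a t \/ free_in x a u
  | TmAbs y b t => ~ (x = y /\ a = b) /\ free_in x a t
  | TmNot t => free_in x a t
  | TmAnd t u => free_in x a t \/ free_in x a u
  | TmOr t u => free_in x a t \/ free_in x a u
  | TmAll y b t => ~ (x = y /\ a = b) /\ free_in x a t
  | TmEx y b t => ~ (x = y /\ a = b) /\ free_in x a t
  | TmEq t u => free_in x a t \/ free_in x a u
  end.

Definition closed (t : term B C) : Prop := forall x a, ~ free_in x a t.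

Definition closed_term_of (t : term B C) (a : ty B) : Prop :=
  has_type t a /\ closed t.

Definition sentence (t : term B C) : Prop := closed_term_of t TyO.

(** Substitution [subst x a s t] = t{(x:a)/s} of s for the free occurrences of
    the variable (x : a) in t (used with closed s, so no capture can occur). *)
Definition vdec (x : nat) (a : ty B) (y : nat) (b : ty B) : bool :=
  if excluded_middle_informative (x = y /\ a = b) then true else false.

Fixpoint subst (x : nat) (a : ty B) (s : term B C) (t : term B C) : term B C :=
  match t with
  | TmVar _ y b => if vdec x a y b then s else TmVar C y b
  | TmCon c => TmCon c
  | TmApp t u => TmApp (subst x a s t) (subst x a s u)
  | TmAbs y b t => if vdec x a y b then TmAbs y b t else TmAbs y b (subst x a s t)
  | TmNot t => TmNot (subst x a s t)
  | TmAnd t u => TmAnd (subst x a s t) (subst x a s u)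
  | TmOr t u => TmOr (subst x a s t) (subst x a s u)
  | TmAll y b t => if vdec x a y b then TmAll y b t else TmAll y b (subst x a s t)
  | TmEx y b t => if vdec x a y b then TmEx y b t else TmEx y b (subst x a s t)
  | TmEq t u => TmEq (subst x a s t) (subst x a s u)
  end.

Definition big_or (t0 : term B C) (l : list (term B C)) : term B C :=
  fold_left (fun acc u => TmOr acc u) l t0.
Definition big_and (t0 : term B C) (l : list (term B C)) : term B C :=
  fold_left (fun acc u => TmAnd acc u) l t0.

Definition upd (U : Type) (rho : nat -> ty B -> U) (y : nat) (b : ty B) (u : U)
  : nat -> ty B -> U :=
  fun z c => if vdec y b z c then u else rho z c.

(** Henkin interpretations (general models), presented single-sorted:
    [D a] is the domain of type [a] inside a carrier [U], [app] is application,
    [vT]/[vF] are the truth values, [I] interprets constants, and [ev] is the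
    (required-to-exist) evaluation of terms under assignments. *)
Record interp : Type := {
  U : Type;
  D : ty B -> U -> Prop;
  app : U -> U -> U;
  vT : U;
  vF : U;
  I : C -> U;
  ev : (nat -> ty B -> U) -> term B C -> U;
  TF_neq : vT <> vF;
  D_o : forall u, D TyO u <-> (u = vT \/ u = vF);
  D_nonempty : forall a, exists u, D a u;
  D_app : forall a b f u, D (TyArr a b) f -> D a u -> D b (app f u);
  D_ext : forall a b f g, D (TyArr a b) f -> D (TyArr a b) g ->
            (forall u, D a u -> app f u = app g u) -> f = g;
  I_typed : forall c, D (ctype c) (I c);
  ev_typed : forall rho t a, (forall y b, D b (rho y b)) ->
            has_type t a -> D a (ev rho t);
  ev_var : forall rho y b, ev rho (TmVar C y b) = rho y b;
  ev_con : forall rho c, ev rho (TmCon c) = I c;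
  ev_app : forall rho t u, ev rho (TmApp t u) = app (ev rho t) (ev rho u);
  ev_abs : forall rho y b t c u, (forall z d, D d (rho z d)) -> has_type t c ->
            D b u -> app (ev rho (TmAbs y b t)) u = ev (upd rho y b u) t;
  ev_not : forall rho t, (forall z d, D d (rho z d)) -> has_type t TyO ->
            (ev rho (TmNot t) = vT <-> ev rho t = vF);
  ev_and : forall rho t u, (forall z d, D d (rho z d)) -> has_type t TyO ->
            has_type u TyO ->
            (ev rho (TmAnd t u) = vT <-> (ev rho t = vT /\ ev rho u = vT));
  ev_or : forall rho t u, (forall z d, D d (rho z d)) -> has_type t TyO ->
            has_type u TyO ->
            (ev rho (TmOr t u) = vT <-> (ev rho t = vT \/ ev rho u = vT));
  ev_all : forall rho y b t, (forall z d, D d (rho z d)) -> has_type t TyO ->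
            (ev rho (TmAll y b t) = vT <->
             (forall u, D b u -> ev (upd rho y b u) t = vT));
  ev_ex : forall rho y b t, (forall z d, D d (rho z d)) -> has_type t TyO ->
            (ev rho (TmEx y b t) = vT <->
             (exists u, D b u /\ ev (upd rho y b u) t = vT));
  ev_eq : forall rho t u a, (forall z d, D d (rho z d)) -> has_type t a ->
            has_type u a -> (ev rho (TmEq t u) = vT <-> ev rho t = ev rho u)
}.

Definition true_in (M : interp) (phi : term B C) : Prop :=
  forall rho : nat -> ty B -> U M, (forall z d, D M d (rho z d)) ->
    ev M rho phi = vT M.

Definition valid (phi : term B C) : Prop := forall M : interp, true_in M phi.

(** Probability on sentences (values of [mu] off sentences are irrelevant). *)
Definition probability (mu : term B C -> R) : Prop :=
  (forall phi, sentence phi -> 0 <= mu phi) /\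
  (forall phi, sentence phi -> valid phi -> mu phi = 1) /\
  (forall phi psi, sentence phi -> sentence psi -> valid (TmNot (TmAnd phi psi)) ->
     mu (TmOr phi psi) = mu phi + mu psi).

End Syntax.

(** Countable alphabet: countably many constants. *)
Definition countable (T : Type) : Prop :=
  exists f : T -> nat, forall a b, f a = f b -> a = b.

Definition is_glb (E : R -> Prop) (l : R) : Prop :=
  (forall r, E r -> l <= r) /\ (forall m, (forall r, E r -> m <= r) -> m <= l).

(* Main.v *)
Require Import Defs.
From Stdlib Require Import Reals List Lra Lia Classical ClassicalEpsilon.
Import ListNotations.
Open Scope R_scope.
Set Implicit Arguments.

Lemma lub_lim (E : R -> Prop) (a : nat -> R) (M : R) :
  (forall n, a n <= a (S n)) -> (forall n, E (a n)) ->
  (forall r, E r -> exists n, r <= a n) -> (forall r, E r -> r <= M) ->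
  exists L, is_lub E L /\ Un_cv a L.
Proof.
  intros Hm HE Hr HM.
  destruct (completeness E) as [L HL].
  { exists M. intros r Hr'. auto. }
  { exists (a 0%nat). auto. }
  exists L. split; auto.
  assert (Hk : forall N k, a N <= a (k + N)%nat).
  { intros N k; induction k; simpl; [lra|]. specialize (Hm (k + N)%nat). lra. }
  intros eps Heps.
  destruct (classic (exists r, E r /\ L - eps < r)) as [[r [Er Hlt]]|Hn].
  - destruct (Hr r Er) as [N HN]. exists N. intros n Hn.
    replace n with ((n - N) + N)%nat by lia.
    pose proof (Hk N (n - N)%nat).
    assert (a (n - N + N)%nat <= L) by (apply (proj1 HL); auto).
    unfold R_dist. rewrite Rabs_left1 by lra. lra.
  - exfalso. assert (L <= L - eps); [|lra].
    apply (proj2 HL). intros r Er. apply Rnot_lt_le. intro H. apply Hn. eauto.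
Qed.

Lemma glb_lim (E : R -> Prop) (a : nat -> R) (m : R) :
  (forall n, a (S n) <= a n) -> (forall n, E (a n)) ->
  (forall r, E r -> exists n, a n <= r) -> (forall r, E r -> m <= r) ->
  exists L, is_glb E L /\ Un_cv a L.
Proof.
  intros Hm HE Hr HM.
  destruct (@lub_lim (fun r => E (- r)) (fun n => - a n) (- m)) as [L [HL HC]].
  - intros n; specialize (Hm n); lra.
  - intros n. rewrite Ropp_involutive. auto.
  - intros r Er. destruct (Hr _ Er) as [n Hn]. exists n. lra.
  - intros r Er. specialize (HM _ Er). lra.
  - exists (- L). split.
    + split.
      * intros r Er. assert (- r <= L); [|lra]. apply (proj1 HL). rewrite Ropp_involutive; auto.
      * intros m' Hm'. assert (L <= - m'); [|lra]. apply (proj2 HL). intros r Er.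
        specialize (Hm' _ Er). lra.
    + intros eps Heps. destruct (HC eps Heps) as [N HN]. exists N. intros n Hn.
      specialize (HN n Hn). unfold R_dist in *.
      replace (a n - - L) with (- (- a n - L)) by ring. rewrite Rabs_Ropp. auto.
Qed.

Section S.
Variables (B C : Type) (ctype : C -> ty B).

Definition ents (p q : term B C) := forall (M : interp ctype) rho,
  (forall z d, D M d (rho z d)) -> ev M rho p = vT M -> ev M rho q = vT M.

Lemma two (M : interp ctype) rho p : (forall z d, D M d (rho z d)) ->
  has_type ctype p TyO -> ev M rho p = vT M \/ ev M rho p = vF M.
Proof. intros Hr Hp. apply (proj1 (D_o M _)). apply (ev_typed M); auto. Qed.

Lemma sent_not p : sentence ctype p -> sentence ctype (TmNot p).
Proof. intros [Ht Hc]. split. constructor; auto. intros y b H. apply (Hc y b). exact H. Qed.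

Lemma sent_or p q : sentence ctype p -> sentence ctype q -> sentence ctype (TmOr p q).
Proof.
  intros [Hp Cp] [Hq Cq]. split. constructor; auto.
  intros y b [H|H]; [apply (Cp y b) | apply (Cq y b)]; auto.
Qed.

Lemma mu_le1 mu (Hmu : probability ctype mu) p : sentence ctype p ->
  mu p + mu (TmNot p) = 1 /\ mu p <= 1.
Proof.
  intros Hp. destruct Hmu as (H0 & H1 & H2).
  assert (E : mu (TmOr p (TmNot p)) = mu p + mu (TmNot p)).
  { apply H2; auto using sent_not.
    intros M rho Hr. destruct Hp as [Htp _].
    assert (Ht2 : has_type ctype (TmAnd p (TmNot p)) TyO) by (repeat constructor; auto).
    apply (ev_not M); auto.
    destruct (two M rho Hr Ht2) as [Hv|Hv]; auto.
    exfalso. apply (ev_and M) in Hv; auto; [|constructor; auto].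
    destruct Hv as [Ha Hb]. apply (ev_not M) in Hb; auto. apply (TF_neq M). congruence. }
  assert (V : mu (TmOr p (TmNot p)) = 1).
  { apply H1. apply sent_or; auto using sent_not.
    intros M rho Hr. destruct Hp as [Htp _]. apply (ev_or M); auto. constructor; auto.
    destruct (two M rho Hr Htp) as [Hv|Hv]; [left; auto | right; apply (ev_not M); auto]. }
  pose proof (H0 _ (sent_not Hp)). split; lra.
Qed.

Lemma mono mu (Hmu : probability ctype mu) p q :
  sentence ctype p -> sentence ctype q -> ents p q -> mu p <= mu q.
Proof.
  intros Hp Hq He.
  pose proof (mu_le1 Hmu Hq) as [Q1 _].
  pose proof (mu_le1 Hmu (sent_or Hp (sent_not Hq))) as [_ Q2].
  assert (E : mu (TmOr p (TmNot q)) = mu p + mu (TmNot q)).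
  { destruct Hmu as (H0 & H1 & H2). apply H2; auto using sent_not.
    intros M rho Hr. destruct Hp as [Htp _]. destruct Hq as [Htq _].
    assert (Ht2 : has_type ctype (TmAnd p (TmNot q)) TyO) by (repeat constructor; auto).
    apply (ev_not M); auto.
    destruct (two M rho Hr Ht2) as [Hv|Hv]; auto.
    exfalso. apply (ev_and M) in Hv; auto; [|constructor; auto].
    destruct Hv as [Ha Hb]. apply (ev_not M) in Hb; auto. apply (TF_neq M).
    rewrite <- Hb. symmetry. apply (He M rho Hr Ha). }
  lra.
Qed.

Lemma subst_type x a s : has_type ctype s a ->
  forall t b, has_type ctype t b -> has_type ctype (subst x a s t) b.
Proof.
  intros Hs t b Ht. induction Ht; simpl; unfold vdec;
  repeat match goal with |- context [excluded_middle_informative ?P] =>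
    destruct (excluded_middle_informative P) end;
  try (destruct a0; subst); first [eassumption | econstructor; eauto].
Qed.

Lemma subst_free x a (s : term B C) : closed s ->
  forall t y b, free_in y b (subst x a s t) -> free_in y b t /\ ~ (y = x /\ b = a).
Proof.
  intros Hs t; induction t; simpl; intros y b H; unfold vdec in *;
  repeat match goal with H : context [excluded_middle_informative ?P] |- _ =>
    destruct (excluded_middle_informative P) end; simpl in *;
  try (exfalso; apply (Hs y b H); fail); try tauto;
  try (destruct H as [H|H]; [apply IHt1 in H | apply IHt2 in H]; tauto);
  try (destruct H as [H1 H2]; apply IHt in H2; tauto).
  1: destruct H; subst; split; auto; intros [? ?]; subst; tauto.
  all: first [apply IHt in H; tauto | match goal with E : _ = _ /\ _ = _ |- _ => destruct E; subst; tauto end].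
Qed.

Lemma bor_ev (M : interp ctype) rho : (forall z d, D M d (rho z d)) ->
  forall l t0, has_type ctype t0 TyO -> (forall u, In u l -> has_type ctype u TyO) ->
  (ev M rho (big_or t0 l) = vT M <-> exists u, In u (t0 :: l) /\ ev M rho u = vT M).
Proof.
  intros Hr. induction l as [|a l IH]; intros t0 H0 Hl.
  - simpl. split; [intros; exists t0; auto | intros [u [[<-|[]] H]]; auto].
  - unfold big_or in *; simpl. rewrite IH; [| constructor; auto; apply Hl; simpl; auto
      | intros; apply Hl; simpl; auto].
    assert (Ha : has_type ctype a TyO) by (apply Hl; simpl; auto).
    split; intros [u [Hu Hv]].
    + destruct Hu as [<-|Hu].
      * apply (ev_or M) in Hv; auto. destruct Hv; [exists t0 | exists a]; simpl; auto.
      * exists u; simpl; auto.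
    + destruct Hu as [<-|[<-|Hu]].
      * exists (TmOr t0 a); split; simpl; auto. apply (ev_or M); auto.
      * exists (TmOr t0 a); split; simpl; auto. apply (ev_or M); auto.
      * exists u; simpl; auto.
Qed.

Lemma band_ev (M : interp ctype) rho : (forall z d, D M d (rho z d)) ->
  forall l t0, has_type ctype t0 TyO -> (forall u, In u l -> has_type ctype u TyO) ->
  (ev M rho (big_and t0 l) = vT M <-> forall u, In u (t0 :: l) -> ev M rho u = vT M).
Proof.
  intros Hr. induction l as [|a l IH]; intros t0 H0 Hl.
  - simpl. split; [intros H u [<-|[]]; auto | intros H; apply H; auto].
  - unfold big_and in *; simpl. rewrite IH; [| constructor; auto; apply Hl; simpl; auto
      | intros; apply Hl; simpl; auto].
    assert (Ha : has_type ctype a TyO) by (apply Hl; simpl; auto).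
    split; intros H.
    + assert (Hv : ev M rho (TmAnd t0 a) = vT M) by (apply H; simpl; auto).
      apply (ev_and M) in Hv; auto. destruct Hv.
      intros u [<-|[<-|Hu]]; auto. apply H; simpl; auto.
    + intros u [<-|Hu].
      * apply (ev_and M); auto.
      * apply H; simpl; auto.
Qed.

Lemma bor_type : forall l t0, has_type ctype t0 TyO ->
  (forall u, In u l -> has_type ctype u TyO) -> has_type ctype (big_or t0 l) TyO.
Proof.
  induction l; intros t0 H Hl; unfold big_or in *; simpl; auto.
  apply IHl; [constructor; auto; apply Hl; simpl; auto | intros; apply Hl; simpl; auto].
Qed.

Lemma band_type : forall l t0, has_type ctype t0 TyO ->
  (forall u, In u l -> has_type ctype u TyO) -> has_type ctype (big_and t0 l) TyO.
Proof.
  induction l; intros t0 H Hl; unfold big_and in *; simpl; auto.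
  apply IHl; [constructor; auto; apply Hl; simpl; auto | intros; apply Hl; simpl; auto].
Qed.

Lemma bor_free : forall (l : list (term B C)) t0 y b, free_in y b (big_or t0 l) ->
  exists u, In u (t0 :: l) /\ free_in y b u.
Proof.
  induction l; intros t0 y b H; unfold big_or in *; simpl in *; [eauto|].
  apply IHl in H. destruct H as [u [[<-|Hu] H]].
  - destruct H; eauto.
  - eauto.
Qed.

Lemma band_free : forall (l : list (term B C)) t0 y b, free_in y b (big_and t0 l) ->
  exists u, In u (t0 :: l) /\ free_in y b u.
Proof.
  induction l; intros t0 y b H; unfold big_and in *; simpl in *; [eauto|].
  apply IHl in H. destruct H as [u [[<-|Hu] H]].
  - destruct H; eauto.
  - eauto.
Qed.

Lemma bor_sent l t0 : (forall u, In u (t0 :: l) -> sentence ctype u) ->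
  sentence ctype (big_or t0 l).
Proof.
  intros H. split.
  - apply bor_type; [apply H; simpl; auto | intros; apply H; simpl; auto].
  - intros y b Hf. apply bor_free in Hf. destruct Hf as [u [Hu Hf]].
    apply (proj2 (H u Hu) y b Hf).
Qed.

Lemma band_sent l t0 : (forall u, In u (t0 :: l) -> sentence ctype u) ->
  sentence ctype (big_and t0 l).
Proof.
  intros H. split.
  - apply band_type; [apply H; simpl; auto | intros; apply H; simpl; auto].
  - intros y b Hf. apply band_free in Hf. destruct Hf as [u [Hu Hf]].
    apply (proj2 (H u Hu) y b Hf).
Qed.

Lemma bor_ents l t0 l' t0' :
  (forall u, In u (t0 :: l) -> sentence ctype u) ->
  (forall u, In u (t0' :: l') -> sentence ctype u) ->
  (forall u, In u (t0 :: l) -> In u (t0' :: l')) -> ents (big_or t0 l) (big_or t0' l').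
Proof.
  intros H1 H2 Hi M rho Hr H.
  apply (bor_ev M rho Hr) in H; [| apply H1; simpl; auto | intros; apply H1; simpl; auto].
  apply (bor_ev M rho Hr); [apply H2; simpl; auto | intros; apply H2; simpl; auto |].
  destruct H as [u [Hu Hv]]; eauto.
Qed.

Lemma band_ents l t0 l' t0' :
  (forall u, In u (t0 :: l) -> sentence ctype u) ->
  (forall u, In u (t0' :: l') -> sentence ctype u) ->
  (forall u, In u (t0' :: l') -> In u (t0 :: l)) -> ents (big_and t0 l) (big_and t0' l').
Proof.
  intros H1 H2 Hi M rho Hr H.
  rewrite (band_ev M rho Hr) in H; [| apply H1; simpl; auto | intros; apply H1; simpl; auto].
  apply (band_ev M rho Hr); [apply H2; simpl; auto | intros; apply H2; simpl; auto |].
  intros u Hu; auto.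
Qed.

End S.

Theorem mainTheorem8 (B C : Type) (ctype : C -> ty B)
  (Hcount : countable C)
  (mu : term B C -> R) (Hmu : probability ctype mu)
  (phi : term B C) (x : nat) (alpha : ty B)
  (Hphi : has_type ctype phi TyO)
  (Hfree : forall y b, free_in y b phi <-> (y = x /\ b = alpha))
  (t : nat -> term B C)
  (Ht : forall i, closed_term_of ctype (t i) alpha)
  (Henum : forall s, closed_term_of ctype s alpha -> exists i, t i = s) :
  (exists L,
     is_lub (fun r => exists (s0 : term B C) (ss : list (term B C)),
               (forall s, In s (s0 :: ss) -> closed_term_of ctype s alpha) /\
               r = mu (big_or (subst x alpha s0 phi)
                              (map (fun s => subst x alpha s phi) ss))) L /\
     Un_cv (fun n => mu (big_or (subst x alpha (t 0%nat) phi)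
                          (map (fun i => subst x alpha (t i) phi) (seq 1 n)))) L) /\
  (exists L,
     is_glb (fun r => exists (s0 : term B C) (ss : list (term B C)),
               (forall s, In s (s0 :: ss) -> closed_term_of ctype s alpha) /\
               r = mu (big_and (subst x alpha s0 phi)
                               (map (fun s => subst x alpha s phi) ss))) L /\
     Un_cv (fun n => mu (big_and (subst x alpha (t 0%nat) phi)
                          (map (fun i => subst x alpha (t i) phi) (seq 1 n)))) L).
Proof.
  assert (PS : forall s, closed_term_of ctype s alpha -> sentence ctype (subst x alpha s phi)).
  { intros s [Hs Cs]. split. apply subst_type; auto.
    intros y b H. apply subst_free in H; auto. destruct H as [H1 H2]. apply Hfree in H1. tauto. }
  assert (Hidx : forall l, (forall s, In s l -> closed_term_of ctype s alpha) ->
     exists N, forall s, In s l -> exists i, (i <= N)%nat /\ t i = s).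
  { induction l as [|a l IH]; intros Hl.
    - exists 0%nat. intros s [].
    - destruct IH as [N HN]; [intros; apply Hl; simpl; auto|].
      destruct (Henum a) as [i Hi]; [apply Hl; simpl; auto|].
      exists (Nat.max i N). intros s [<-|Hs].
      + exists i; split; auto; lia.
      + destruct (HN s Hs) as [j [Hj Hj']]. exists j; split; auto; lia. }
  assert (Hmem : forall N i, (i <= N)%nat -> In (subst x alpha (t i) phi)
     (subst x alpha (t 0%nat) phi :: map (fun i => subst x alpha (t i) phi) (seq 1 N))).
  { intros N [|i] H; [left; auto | right].
    apply (in_map (fun i => subst x alpha (t i) phi)). apply in_seq. lia. }
  assert (Hsub : forall n s, In s (subst x alpha (t 0%nat) phi ::
      map (fun i => subst x alpha (t i) phi) (seq 1 n)) -> sentence ctype s).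
  { intros n s [<-|Hs]; [auto|]. apply in_map_iff in Hs. destruct Hs as [i [<- _]]. auto. }
  assert (Hseq : forall n, seq 1 (S n) = seq 1 n ++ [S n]).
  { intros; rewrite seq_S; reflexivity. }
  assert (HEs : forall s0 ss, (forall s, In s (s0 :: ss) -> closed_term_of ctype s alpha) ->
     forall u, In u (subst x alpha s0 phi :: map (fun s => subst x alpha s phi) ss) ->
     sentence ctype u).
  { intros s0 ss Hc u [<-|Hu]; [apply PS, Hc; simpl; auto|].
    apply in_map_iff in Hu. destruct Hu as [s [<- Hs]]. apply PS, Hc; simpl; auto. }
  assert (HEi : forall s0 ss, (forall s, In s (s0 :: ss) -> closed_term_of ctype s alpha) ->
     exists N, forall u, In u (subst x alpha s0 phi :: map (fun s => subst x alpha s phi) ss) ->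
     In u (subst x alpha (t 0%nat) phi :: map (fun i => subst x alpha (t i) phi) (seq 1 N))).
  { intros s0 ss Hc. destruct (Hidx _ Hc) as [N HN]. exists N.
    intros u [<-|Hu].
    - destruct (HN s0 (or_introl eq_refl)) as [i [Hi <-]]. apply Hmem; auto.
    - apply in_map_iff in Hu. destruct Hu as [s [<- Hs]].
      destruct (HN s (or_intror Hs)) as [i [Hi <-]]. apply Hmem; auto. }
  assert (HEa : forall n, (forall s, In s (t 0%nat :: map t (seq 1 n)) ->
      closed_term_of ctype s alpha)).
  { intros n s [<-|Hs]; auto. apply in_map_iff in Hs. destruct Hs as [i [<- _]]. auto. }
  split.
  - apply (@lub_lim _ _ 1).
    + intros n. apply (mono Hmu); [apply bor_sent, Hsub | apply bor_sent, Hsub |].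
      apply bor_ents; [apply Hsub | apply Hsub |].
      intros u [<-|Hu]; [left; auto | right]. rewrite Hseq, map_app, in_app_iff. auto.
    + intros n. exists (t 0%nat), (map t (seq 1 n)). split; [apply HEa|].
      rewrite map_map. reflexivity.
    + intros r [s0 [ss [Hc ->]]]. destruct (HEi _ _ Hc) as [N HN]. exists N.
      apply (mono Hmu); [apply bor_sent, HEs; auto | apply bor_sent, Hsub |].
      apply bor_ents; auto; [apply HEs; auto | apply Hsub].
    + intros r [s0 [ss [Hc ->]]]. apply (mu_le1 Hmu). apply bor_sent, HEs; auto.
  - apply (@glb_lim _ _ 0).
    + intros n. apply (mono Hmu); [apply band_sent, Hsub | apply band_sent, Hsub |].
      apply band_ents; [apply Hsub | apply Hsub |].
      intros u [<-|Hu]; [left; auto | right]. rewrite Hseq, map_app, in_app_iff. auto.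
    + intros n. exists (t 0%nat), (map t (seq 1 n)). split; [apply HEa|].
      rewrite map_map. reflexivity.
    + intros r [s0 [ss [Hc ->]]]. destruct (HEi _ _ Hc) as [N HN]. exists N.
      apply (mono Hmu); [apply band_sent, Hsub | apply band_sent, HEs; auto |].
      apply band_ents; auto; [apply Hsub | apply HEs; auto].
    + intros r [s0 [ss [Hc ->]]]. destruct Hmu as [H0 _]. apply H0.
      apply band_sent, HEs; auto.
Qed.
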